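(* Let $N=\{1,\dots,n\}$ and let $F:2^N\to\mathbb{R}$ be quasi-submodular. Suppose the maximization procedure (described in the context) outputs the lattice $[X_+,Y_+]$. Then every global maximizer of $F$ lies in $[X_+,Y_+]$, i.e., for every $X_*\in\arg\max_{X\subseteq N}F(X)$ we have $X_+\subseteq X_*\subseteq Y_+$.
   Context: For $A\subseteq N$ and $i\in N$, write $A+i=A\cup\{i\}$, $A-i=A\setminus\{i\}$, and $F(i\mid A)=F(A+i)-F(A)$. A set function $F:2^N\to\mathbb{R}$ is quasi-submodular if for all $X,Y\subseteq N$ both hold: $F(X\cap Y)\ge F(X)\Rightarrow F(Y)\ge F(X\cup Y)$, and $F(X\cap Y)>F(X)\Rightarrow F(Y)>F(X\cup Y)$. For sets $A,B$, $[A,B]=\{U: A\subseteq U\subseteq B\}$. Maximization procedure: set $X_0=\emptyset$, $Y_0=N$; for $t=0,1,2,\dots$: let $U_t=\{u\in Y_t\setminus X_t: F(u\mid Y_t-u)>0\}$ and $X_{t+1}=X_t\cup U_t$; let $D_t=\{d\in Y_t\setminus X_t: F(d\mid X_t)<0\}$ and $Y_{t+1}=Y_t\setminus D_t$; if $X_{t+1}=X_t$ and $Y_{t+1}=Y_t$, stop and output the lattice $[X_t,Y_t]$; otherwise continue with $t+1$. *)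

(* Defs.v *)
From mathcomp Require Import all_boot all_order all_algebra.
From mathcomp Require Import reals.
Set Implicit Arguments. Unset Strict Implicit. Unset Printing Implicit Defensive.
Import Order.TTheory GRing.Theory Num.Theory.
Local Open Scope ring_scope.

(* Ground set N = {0,...,n-1} represented by 'I_n; subsets are {set 'I_n}. *)

Definition marg {T : finType} {R : numDomainType} (F : {set T} -> R) (i : T) (A : {set T}) : R :=
  F (i |: A) - F A.

Definition quasi_submodular {T : finType} {R : numDomainType} (F : {set T} -> R) : Prop :=
  forall X Y : {set T},
    (F (X :&: Y) >= F X -> F Y >= F (X :|: Y)) /\
    (F (X :&: Y) > F X -> F Y > F (X :|: Y)).

Definition proc_step {T : finType} {R : numDomainType} (F : {set T} -> R)
  (XY : {set T} * {set T}) : {set T} * {set T} :=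
  let X := XY.1 in let Y := XY.2 in
  let U := [set u in Y :\: X | marg F u (Y :\ u) > 0] in
  let D := [set d in Y :\: X | marg F d X < 0] in
  (X :|: U, Y :\: D).

Definition proc_iter {T : finType} {R : numDomainType} (F : {set T} -> R) (t : nat)
  : {set T} * {set T} := iter t (proc_step F) (set0, setT).

Definition proc_outputs {T : finType} {R : numDomainType} (F : {set T} -> R)
  (Xp Yp : {set T}) : Prop :=
  exists t : nat,
    proc_iter F t = (Xp, Yp) /\
    (forall s : nat, (s < t)%N -> proc_step F (proc_iter F s) != proc_iter F s) /\
    proc_step F (Xp, Yp) = (Xp, Yp).

Definition is_global_max {T : finType} {R : numDomainType} (F : {set T} -> R) (X : {set T}) : Prop :=
  forall Z : {set T}, F Z <= F X.

(* Main.v *)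
Require Import Defs.
From mathcomp Require Import all_boot all_order all_algebra.
From mathcomp Require Import reals.
Import Order.TTheory GRing.Theory Num.Theory.
Local Open Scope ring_scope.

Lemma step_inv (R : realType) (n : nat) (F : {set 'I_n} -> R) (X Y Xs : {set 'I_n}) :
  quasi_submodular F -> is_global_max F Xs -> X \subset Xs -> Xs \subset Y ->
  (proc_step F (X, Y)).1 \subset Xs /\ Xs \subset (proc_step F (X, Y)).2.
Proof.
move=> qsF maxXs sXX sXY; rewrite /proc_step /=; split.
- rewrite subUset sXX /=; apply/subsetP => u; rewrite !inE => /andP[/andP[uX uY] hu].
  apply/negPn/negP => uXs.
  have [h _] := qsF (u |: Xs) (Y :\ u).
  have e1 : (u |: Xs) :&: (Y :\ u) = Xs.
    apply/setP=> i; rewrite !inE; case: (eqVneq i u) => [->|iu] /=.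
      by rewrite (negbTE uXs).
    by case iXs: (i \in Xs) => //=; exact: (subsetP sXY _ iXs).
  have e2 : (u |: Xs) :|: (Y :\ u) = Y.
    apply/setP=> i; rewrite !inE; case: (eqVneq i u) => [->|iu] /=.
      by rewrite uY.
    by case iXs: (i \in Xs) => //=; rewrite (subsetP sXY _ iXs).
  rewrite e1 e2 in h; have := h (maxXs _).
  move: hu; rewrite /marg setD1K // subr_gt0 => hu /(lt_le_trans hu).
  by rewrite ltxx.
- apply/subsetP => d dXs; rewrite in_setD (subsetP sXY _ dXs) andbT; apply/negP.
  rewrite !inE => /andP[/andP[dX _] hd].
  have [_ h] := qsF (d |: X) (Xs :\ d).
  have e1 : (d |: X) :&: (Xs :\ d) = X.
    apply/setP=> i; rewrite !inE; case: (eqVneq i d) => [->|id] /=.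
      by rewrite (negbTE dX).
    by case iX: (i \in X) => //=; exact: (subsetP sXX _ iX).
  have e2 : (d |: X) :|: (Xs :\ d) = Xs.
    apply/setP=> i; rewrite !inE; case: (eqVneq i d) => [->|id] /=.
      by rewrite dXs.
    by case iX: (i \in X) => //=; rewrite (subsetP sXX _ iX).
  rewrite e1 e2 in h; move: hd; rewrite /marg subr_lt0 => hd.
  have := h hd; have := maxXs (Xs :\ d); rewrite leNgt => /negP; exact.
Qed.

Theorem theorem2 (R : realType) (n : nat) (F : {set 'I_n} -> R)
  (Xp Yp : {set 'I_n}) :
  quasi_submodular F ->
  proc_outputs F Xp Yp ->
  forall Xs : {set 'I_n}, is_global_max F Xs ->
  Xp \subset Xs /\ Xs \subset Yp.
Proof.
move=> qsF [t [ht _]] Xs maxXs.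
suff H : forall s, (proc_iter F s).1 \subset Xs /\ Xs \subset (proc_iter F s).2.
  by have := H t; rewrite ht.
elim=> [|s [IH1 IH2]]; first by rewrite /= sub0set subsetT.
rewrite /proc_iter iterS -/(proc_iter F s).
case E: (proc_iter F s) IH1 IH2 => [X Y] /= IH1 IH2.
exact: step_inv.
Qed.
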